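(* Let $\gamma$ be a partition. Then $\gamma$ is $n$-colorless if and only if there exists $k\in\hat I$ such that $v^{(k)}(\gamma)\in\mathbb Z_{\ge0}^n$. Moreover, if $\gamma$ is $n$-colorless, then $v^{(k)}(\gamma)=(\delta_{i,k})_{i\in\hat I}$ for all $k\in\hat I$.
   Context: Fix $n\ge3$ and let $\hat I=\{0,1,\dots,n-1\}$, with residues mod $n$. For a partition $\gamma$ let $Y(\gamma)=\{(x,y)\in\mathbb Z_{\ge1}^2:\gamma_x\ge y\}$. The partition $\gamma$ is $n$-colorless if, for each residue $i$ mod $n$, the number of boxes $(x,y)\in Y(\gamma)$ with $x-y\equiv i\pmod n$ is the same. Corners: let $\gamma'_y=|\{x:\gamma_x\ge y\}|$ be the conjugate partition. - $(x,y)\in\mathbb Z_{\ge1}^2$ is a convex corner of $\gamma$ if $\gamma'_{y+1}<\gamma'_y=x$. - $(x,y)$ is a concave corner if $\gamma'_y=x-1$ and either $y=1$ or $\gamma'_{y-1}>x-1$. For $k,i\in\hat I$ let $CC_i^{(k)}(\gamma)$ (resp. $CV_i^{(k)}(\gamma)$) be the set of concave (resp. convex) corners $(x,y)$ with $k+x-y\equiv i\pmod n$. Define $v^{(k)}(\gamma)\in\mathbb Z^n$ (coordinates indexed by $\hat I$) by $v^{(k)}(\gamma)_i=|CC_i^{(k)}(\gamma)|-|CV_i^{(k)}(\gamma)|$. *)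

(* Defs.v *)
From mathcomp Require Import all_boot all_order all_algebra.
Set Implicit Arguments. Unset Strict Implicit. Unset Printing Implicit Defensive.
Import GRing.Theory Num.Theory.

(* A partition is a weakly decreasing finite list of positive naturals;
   gamma_x (x >= 1) is [part g x] = nth 0 g x.-1, and 0 beyond the length. *)
Definition is_partition (g : seq nat) : bool :=
  sorted geq g && all (fun a => 0 < a) g.

Definition part (g : seq nat) (x : nat) : nat := nth 0 g x.-1.

Definition conjp (g : seq nat) (y : nat) : nat := count (fun a => y <= a) g.

Definition in_diagram (g : seq nat) (x y : nat) : bool :=
  [&& 0 < x, 0 < y & y <= part g x].

Definition res (n k x y : nat) : int := ((Posz k + Posz x - Posz y)%R %% Posz n)%Z.

(* all boxes and corners lie in [1, bnd g] x [1, bnd g] *)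
Definition bnd (g : seq nat) : nat := (size g + head 0 g).+1.

Definition nboxes (n : nat) (g : seq nat) (i : nat) : nat :=
  \sum_(1 <= x < (bnd g).+1) \sum_(1 <= y < (bnd g).+1)
     (in_diagram g x y && (res n 0 x y == Posz i)).

Definition colorless (n : nat) (g : seq nat) : Prop :=
  forall i j : 'I_n, nboxes n g i = nboxes n g j.

Definition convex_corner (g : seq nat) (x y : nat) : bool :=
  [&& 0 < x, 0 < y, conjp g y.+1 < conjp g y & conjp g y == x].

Definition concave_corner (g : seq nat) (x y : nat) : bool :=
  [&& 0 < x, 0 < y, conjp g y == x.-1 & (y == 1) || (conjp g y.-1 > x.-1)].

Definition nCC (n : nat) (g : seq nat) (k i : nat) : nat :=
  \sum_(1 <= x < (bnd g).+1) \sum_(1 <= y < (bnd g).+1)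
     (concave_corner g x y && (res n k x y == Posz i)).

Definition nCV (n : nat) (g : seq nat) (k i : nat) : nat :=
  \sum_(1 <= x < (bnd g).+1) \sum_(1 <= y < (bnd g).+1)
     (convex_corner g x y && (res n k x y == Posz i)).

Definition vk (n : nat) (g : seq nat) (k i : 'I_n) : int :=
  (Posz (nCC n g k i) - Posz (nCV n g k i))%R.

Arguments vk : clear implicits.
Arguments nCC : clear implicits.
Arguments nCV : clear implicits.
Arguments nboxes : clear implicits.

(* Main.v *)
Require Import Defs.
From mathcomp Require Import all_boot all_order all_algebra zify ring.
Set Implicit Arguments. Unset Strict Implicit. Unset Printing Implicit Defensive.
Import GRing.Theory Num.Theory.

Lemma geqT : transitive geq.
Proof. by move=> y x z h1 h2; apply: leq_trans h2 h1. Qed.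

Lemma nth_le_head (g : seq nat) j : sorted geq g -> (nth 0 g j <= head 0 g)%N.
Proof.
case: g => [|a g] //= sg; first by rewrite nth_nil.
case: j => //= j.
have := order_path_min geqT sg.
move=> /allP al.
case: (ltnP j (size g)) => hj; first by apply: al; apply: mem_nth.
by rewrite nth_default.
Qed.

Lemma nth_mono (g : seq nat) j : sorted geq g -> (nth 0 g j.+1 <= nth 0 g j)%N.
Proof.
elim: g j => [|a g IH] j /= sg; first by rewrite !nth_nil.
case: j => [|j] /=.
  exact: (@nth_le_head (a :: g) 1 sg).
apply: IH. exact: path_sorted sg.
Qed.

Lemma conjpP g x y : sorted geq g -> (0 < x)%N -> (0 < y)%N ->
  (x <= conjp g y)%N = (y <= part g x)%N.
Proof.
rewrite /conjp /part.
elim: g x => [|a g IH] x /= sg hx hy; first by rewrite nth_nil; lia.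
have sg' : sorted geq g := path_sorted sg.
have al : forall b, b \in g -> (b <= a)%N.
  apply/allP. exact: (order_path_min geqT sg).
have c0 : (a < y)%N -> count (fun b => y <= b)%N g = 0%N.
  move=> hay; apply/eqP; rewrite -leqn0 leqNgt -has_count; apply/hasPn => b /al hb.
  lia.
case: x hx => [|[|x]] // _ /=.
  case: (leqP y a) => h; first by rewrite /= add1n.
  by rewrite c0.
case: (leqP y a) => h.
  by rewrite add1n ltnS (IH x.+1).
rewrite c0 // add0n.
symmetry; apply/negbTE; rewrite -ltnNge.
case: (ltnP x (size g)) => hj; first by apply: leq_ltn_trans (al _ (mem_nth 0 hj)) h.
by rewrite nth_default //; lia.
Qed.

Lemma concaveE g x y : sorted geq g -> (0 < x)%N -> (0 < y)%N ->
  concave_corner g x y = (y == (part g x).+1) && ((x == 1%N) || (part g x < part g x.-1)%N).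
Proof.
move=> sg hx hy.
have H1 := fun a b => @conjpP g a b sg.
rewrite /concave_corner hx hy /= eqn_leq leqNgt.
case: x hx => [|[|x]] // _; case: y hy => [|[|y]] // _ /=.
- rewrite leq0n H1 //. have := nth_mono 0 sg; rewrite /part /=. lia.
- rewrite leq0n !H1 //. have := nth_mono 0 sg; rewrite /part /=. lia.
- rewrite !H1 //. have := nth_mono x.+1 sg; rewrite /part /=. lia.
- rewrite !H1 //. have := nth_mono x.+1 sg; rewrite /part /=. lia.
Qed.

Lemma convexE g x y : sorted geq g -> (0 < x)%N -> (0 < y)%N ->
  convex_corner g x y = (y == part g x) && (part g x.+1 < part g x)%N.
Proof.
move=> sg hx hy.
have H1 := fun a b => @conjpP g a b sg.
rewrite /convex_corner hx hy /=.
case E: (conjp g y == x).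
  move: (E) => /eqP E'. rewrite E' ltnNge H1 // andbT.
  move: E; rewrite eqn_leq [(conjp g y <= x)%N]leqNgt !H1 //; lia.
rewrite andbF; move: E => /negbT; rewrite eqn_leq [(conjp g y <= x)%N]leqNgt !H1 //. lia.
Qed.

Local Open Scope ring_scope.

Definition Sh (g : seq nat) (P : nat -> nat -> bool) (h : int -> int) : int :=
  \sum_(1 <= x < (bnd g).+1) \sum_(1 <= y < (bnd g).+1)
     (if P x y then h (x%:Z - y%:Z) else 0).

Lemma sum_single (N y0 : nat) (b : bool) (F : nat -> int) :
  (1 <= y0 <= N)%N ->
  \sum_(1 <= y < N.+1) (if (y == y0) && b then F y else 0) = if b then F y0 else 0.
Proof.
move=> hy; case: b.
  rewrite (bigD1_seq y0) /= ?mem_index_iota ?iota_uniq //.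
  rewrite eqxx big1 ?addr0 // => i /negbTE ->; by [].
by rewrite big1 // => i _; rewrite andbF.
Qed.

Lemma part_le_bnd g x : sorted geq g -> (part g x < bnd g)%N.
Proof. move=> sg; have := nth_le_head x.-1 sg; rewrite /part /bnd; lia. Qed.

Lemma part_big g x : (bnd g <= x)%N -> part g x = 0%N.
Proof. move=> h; rewrite /part nth_default //; move: h; rewrite /bnd; lia. Qed.

Definition c1 g x := (x == 1%N) || (part g x < part g x.-1)%N.
Definition c2 g x := (part g x.+1 < part g x)%N.

Lemma R1 g h : sorted geq g ->
  Sh g (concave_corner g) h =
  \sum_(1 <= x < (bnd g).+1) (if c1 g x then h (x%:Z - (part g x).+1%:Z) else 0).
Proof.
move=> sg; apply: eq_big_nat => x hx.
rewrite -(@sum_single (bnd g) (part g x).+1 (c1 g x) (fun y => h (x%:Z - y%:Z))); last first.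
  by have := part_le_bnd x sg; lia.
apply: eq_big_nat => y hy; rewrite concaveE //; try lia.
Qed.

Lemma R2 g h : sorted geq g ->
  Sh g (convex_corner g) h =
  \sum_(1 <= x < (bnd g).+1) (if c2 g x then h (x%:Z - (part g x)%:Z) else 0).
Proof.
move=> sg; apply: eq_big_nat => x hx.
case: (posnP (part g x)) => hp.
  rewrite /c2 hp ltn0 big1_seq // => y; rewrite mem_index_iota => hy.
  by rewrite convexE ?hp ?ltn0 ?andbF //; lia.
transitivity (\sum_(1 <= y < (bnd g).+1) (if (y == part g x) && c2 g x then h (x%:Z - y%:Z) else 0)); last first.
  by rewrite sum_single //; have := part_le_bnd x sg; lia.
apply: eq_big_nat => y hy; rewrite convexE //; lia.
Qed.

Lemma R3 g h : sorted geq g ->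
  Sh g (in_diagram g) h =
  \sum_(1 <= x < (bnd g).+1) \sum_(1 <= y < (part g x).+1) h (x%:Z - y%:Z).
Proof.
move=> sg; apply: eq_big_nat => x hx.
have hb := part_le_bnd x sg.
rewrite (@big_cat_nat _ _ _ (part g x).+1) //=; last by lia.
rewrite [X in _ + X]big1_seq ?addr0; last first.
  move=> y; rewrite mem_index_iota /in_diagram => hy; case: ifP => //; lia.
apply: eq_big_nat => y hy; rewrite /in_diagram; case: ifP => //; lia.
Qed.

Lemma inner (w : int -> int) (x : int) (m : nat) :
  \sum_(1 <= y < m.+1) (w (x - y%:Z) *+ 2 - w (x - y%:Z + 1) - w (x - y%:Z - 1))
  = w (x - m%:Z) - w (x - m%:Z - 1) - w x + w (x - 1).
Proof.
elim: m => [|m IH].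
  rewrite big_geq // subr0; ring.
rewrite big_nat_recr //= IH.
have -> : x - m.+1%:Z + 1 = x - m%:Z by lia.
have -> : x - m.+1%:Z = x - m%:Z - 1 by lia.
ring.
Qed.

Lemma outer g (w : int -> int) : sorted geq g -> forall N : nat, (0 < N)%N ->
  \sum_(1 <= x < N.+1) (if c1 g x then w (x%:Z - (part g x).+1%:Z) else 0)
  - \sum_(1 <= x < N.+1) (if c2 g x then w (x%:Z - (part g x)%:Z) else 0)
  + \sum_(1 <= x < N.+1) (w (x%:Z - (part g x)%:Z) - w (x%:Z - (part g x)%:Z - 1)
                          - w x%:Z + w (x%:Z - 1))
  - w 0 = (if c2 g N then 0 else w (N%:Z - (part g N)%:Z)) - w N%:Z.
Proof.
move=> sg; elim=> [|N IH] // _.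
case: N IH => [|N] IH.
  rewrite !big_nat1 /c1 eqxx /=.
  have -> : 1%:Z - (part g 1).+1%:Z = 1%:Z - (part g 1)%:Z - 1 by lia.
  have -> : 1%:Z - 1 = 0 by []. case: ifP => _; ring.
rewrite !(@big_nat_recr _ _ _ N.+2) //=.
have := IH isT.
have -> : c1 g N.+2 = c2 g N.+1 by [].
have mono := nth_mono N sg.
have -> : N.+2%:Z - (part g N.+2).+1%:Z = N.+2%:Z - (part g N.+2)%:Z - 1 by lia.
have -> : N.+2%:Z - 1 = N.+1%:Z by lia.
case E: (c2 g N.+1) => H;
  set A := \sum_(1 <= i < N.+2) (if c1 g i then _ else _) in H *;
  set B := \sum_(1 <= i < N.+2) (if c2 g i then _ else _) in H *;
  set C := \sum_(1 <= i < N.+2) (w _ - _ - _ + _) in H *.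
  have HA : A = (0 - w N.+1%:Z) + B - C + w 0 by rewrite -H; ring.
  rewrite HA; case: ifP => _; ring.
have Eq : part g N.+2 = part g N.+1.
  move: E mono; rewrite /c2 /part /=; lia.
have -> : N.+2%:Z - (part g N.+2)%:Z - 1 = N.+1%:Z - (part g N.+1)%:Z by rewrite Eq; lia.
have HA : A = (w (N.+1%:Z - (part g N.+1)%:Z) - w N.+1%:Z) + B - C + w 0 by rewrite -H; ring.
rewrite HA; case: ifP => _; ring.
Qed.

Lemma W g (w : int -> int) : sorted geq g ->
  Sh g (concave_corner g) w - Sh g (convex_corner g) w =
  w 0 - (Sh g (in_diagram g) w *+ 2 - Sh g (in_diagram g) (fun c => w (c + 1))
         - Sh g (in_diagram g) (fun c => w (c - 1))).
Proof.
move=> sg.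
rewrite R1 // R2 // !R3 //.
have O := @outer g w sg (bnd g) isT.
have hb : c2 g (bnd g) = false by rewrite /c2 !part_big.
rewrite hb part_big // subr0 subrr in O.
set A := \sum_(1 <= i < _) (if c1 g i then _ else _) in O *.
set B := \sum_(1 <= i < _) (if c2 g i then _ else _) in O *.
clearbody A B.
rewrite -sumrMnl -!sumrB.
rewrite (@eq_big_nat _ _ _ _ _ _
   (fun x => w (x%:Z - (part g x)%:Z) - w (x%:Z - (part g x)%:Z - 1) - w x%:Z + w (x%:Z - 1))); last first.
  by move=> x _; rewrite -sumrMnl -!sumrB inner.
by apply/eqP; rewrite -subr_eq0 opprB addrA O.
Qed.
Lemma M2 (n : nat) (i k a: int) : (0 < n)%N -> 0 <= i < n ->
  (((a + k) %% n)%Z == i) = ((k %% n)%Z == ((i - a) %% n)%Z).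
Proof. move=> hn hi. rewrite -{1}(modz_small hi) !eqz_mod_dvd. congr (_ %| _)%Z. ring. Qed.

Lemma cyc (n : nat) (F : int -> int) : (0 < n)%N -> (forall c, F (c %% n)%Z = F c) ->
  (forall c : nat, (c < n)%N ->
     0 <= Posz (c == 0%N) - (F c%:Z *+ 2 - F (c%:Z - 1) - F (c%:Z + 1))) ->
  forall c, F c = F 0.
Proof.
move=> hn Hp Hu.
have Fper : forall c, F (c + n%:Z) = F c by move=> c; rewrite -Hp modzDr Hp.
pose d c := F (c + 1) - F c.
pose D c := F c *+ 2 - F (c - 1) - F (c + 1).
have DE : forall c, D c = d (c - 1) - d c by move=> c; rewrite /D /d subrK; ring.
have Sd : \sum_(0 <= c < n) d c%:Z = 0.
  rewrite (eq_bigr (fun k : nat => F k.+1%:Z - F k%:Z)); last first.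
    by move=> k _; rewrite /d; have -> : k%:Z + 1 = k.+1%:Z by lia.
  by rewrite telescope_sumr // -(add0r (Posz n)) Fper subrr.
have SD : \sum_(0 <= c < n) D c%:Z = 0.
  rewrite (eq_bigr (fun k : nat => - d (k.+1%:Z - 1) - - d (k%:Z - 1))); last first.
    move=> k _; rewrite DE; have -> : k.+1%:Z - 1 = k%:Z by lia. by rewrite opprK addrC.
  rewrite telescope_sumr // /d.
  have -> : n%:Z - 1 + 1 = 0 + n%:Z by ring.
  have -> : n%:Z - 1 = -1 + n%:Z by ring.
  rewrite !Fper; ring.
have SW : forall m : nat, \sum_(0 <= c < m) c%:Z * D c%:Z
                        = \sum_(0 <= c < m) d c%:Z - m%:Z * d (m%:Z - 1).
  elim => [|m IH]; first by rewrite !big_geq // mul0r subr0.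
  rewrite !big_nat_recr //= IH DE.
  have -> : m.+1%:Z - 1 = m%:Z by lia.
  have -> : m.+1%:Z = m%:Z + 1 by lia.
  ring.
pose u (c : nat) := Posz (c == 0%N) - D c%:Z.
have Su : \sum_(0 <= c < n) u c = 1.
  rewrite sumrB SD subr0.
  case: n hn {Hu Fper Hp Sd SD} => [|n] // _.
  by rewrite big_nat_recl // big1 // addr0.
have Scu : \sum_(0 <= c < n) c%:Z * u c = n%:Z * d (n%:Z - 1).
  rewrite (eq_bigr (fun c : nat => c%:Z * Posz (c == 0%N) - c%:Z * D c%:Z)); last first.
    by move=> c _; rewrite /u mulrBr.
  rewrite sumrB SW Sd big1 ?sub0r ?opprK //.
  by move=> [|c] _; rewrite ?mul0r ?mulr0.
have ucge : forall c : nat, (c < n)%N -> 0 <= u c by move=> c hc; exact: Hu.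
have h0 : 0 <= \sum_(0 <= c < n) c%:Z * u c.
  rewrite big_nat_cond; apply: sumr_ge0 => c /andP [/andP [_ hc] _].
  by apply: mulr_ge0 => //; apply: ucge.
have h1 : \sum_(0 <= c < n) c%:Z * u c <= (n%:Z - 1) * 1.
  rewrite -Su mulr_sumr [X in _ <= X]big_nat_cond [X in X <= _]big_nat_cond.
  apply: ler_sum => c /andP [/andP [_ hc] _].
  apply: ler_wpM2r; first exact: ucge.
  lia.
have dn : d (n%:Z - 1) = 0.
  move: h0 h1; rewrite Scu; nia.
have Z : forall c : nat, (c < n)%N -> c%:Z * u c = 0.
  move=> c hc.
  have := @psumr_eq0P _ _ predT (fun i : 'I_n => (nat_of_ord i)%:Z * u i).
  move=> /(_ _ _ (Ordinal hc) isT) /=; apply.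
    by move=> i _; apply: mulr_ge0 => //; apply: ucge.
  by rewrite -(big_mkord predT (fun i => i%:Z * u i)) Scu dn mulr0.
have D0 : forall c : nat, (c < n)%N -> D c%:Z = 0.
  have D1 : forall c : nat, (0 < c < n)%N -> D c%:Z = 0.
    move=> c /andP [c0 hc]; have := Z c hc; rewrite /u.
    case: c c0 hc => [|c] // _ _.
    by move/eqP; rewrite mulf_eq0 /= sub0r oppr_eq0 => /eqP h; exact: h.
  case=> [|c] hc; last by apply: D1; rewrite hc.
  have SD' := SD.
  have hn1 : n = n.-1.+1 by lia.
  rewrite hn1 big_nat_recl // big1_seq ?addr0 // in SD'.
  move=> c; rewrite mem_index_iota => /andP [_ hc']; apply: D1; lia.
have dconst : forall c : nat, (c < n)%N -> d c%:Z = d (-1).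
  elim=> [|c IH] hc.
    by move: (D0 0%N hn); rewrite DE sub0r => /eqP; rewrite subr_eq0 => /eqP.
  move: (D0 _ hc); rewrite DE; have -> : c.+1%:Z - 1 = c%:Z by lia.
  by move/eqP; rewrite subr_eq0 => /eqP <-; apply: IH; lia.
have dm1 : d (-1) = 0.
  have := dconst n.-1 ltac:(lia); rewrite -dn => <-; congr d; lia.
have Fc : forall c : nat, (c <= n)%N -> F c%:Z = F 0.
  elim=> [|c IH] hc //.
  have := dconst c ltac:(lia); rewrite dm1 /d => /eqP; rewrite subr_eq0 => /eqP.
  have -> : c%:Z + 1 = c.+1%:Z by lia.
  by move=> ->; apply: IH; lia.
move=> c; rewrite -Hp.
have hge : 0 <= (c %% n)%Z by apply: modz_ge0; lia.
have hlt : (c %% n)%Z < n by apply: ltz_pmod; lia.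
rewrite -(gez0_abs hge); apply: Fc.
have := hlt; rewrite -{1}(gez0_abs hge); lia.
Qed.

Lemma Sh_ext g P h1 h2 : (forall c, h1 c = h2 c) -> Sh g P h1 = Sh g P h2.
Proof. by move=> H; apply: eq_bigr => x _; apply: eq_bigr => y _; rewrite H. Qed.

Lemma PoszS2 (F : nat -> nat -> nat) (N : nat) :
  Posz (\sum_(1 <= x < N) \sum_(1 <= y < N) F x y)%N
  = \sum_(1 <= x < N) \sum_(1 <= y < N) Posz (F x y).
Proof.
rewrite (big_morph Posz PoszD (erefl (Posz 0))).
by apply: eq_bigr => x _; rewrite (big_morph Posz PoszD (erefl (Posz 0))).
Qed.

Lemma nCC_Sh n g (k i : nat) : Posz (nCC n g k i) =
  Sh g (concave_corner g) (fun c => Posz (((k%:Z + c) %% n)%Z == i%:Z)).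
Proof.
rewrite /nCC PoszS2; apply: eq_bigr => x _; apply: eq_bigr => y _.
by rewrite /res addrA; case: (concave_corner g x y).
Qed.

Lemma nCV_Sh n g (k i : nat) : Posz (nCV n g k i) =
  Sh g (convex_corner g) (fun c => Posz (((k%:Z + c) %% n)%Z == i%:Z)).
Proof.
rewrite /nCV PoszS2; apply: eq_bigr => x _; apply: eq_bigr => y _.
by rewrite /res addrA; case: (convex_corner g x y).
Qed.

Lemma NBE n g (a i : int) : (0 < n)%N -> 0 <= i < n ->
  Sh g (in_diagram g) (fun c => Posz (((a + c) %% n)%Z == i)) =
  Posz (nboxes n g (absz ((i - a) %% n)%Z)).
Proof.
move=> hn hi.
have hge : 0 <= ((i - a) %% n)%Z by apply: modz_ge0; lia.
rewrite /nboxes PoszS2; apply: eq_bigr => x _; apply: eq_bigr => y _.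
rewrite /res (gez0_abs hge) add0r M2 //.
by case: (in_diagram g x y).
Qed.

Local Close Scope ring_scope.

Theorem mainTheorem10 (n : nat) (g : seq nat) :
  2 < n -> is_partition g ->
  (colorless n g <-> exists k : 'I_n, forall i : 'I_n, (0 <= vk n g k i)%R) /\
  (colorless n g -> forall k i : 'I_n, vk n g k i = Posz (i == k)).
Proof.
Local Open Scope ring_scope.
move=> hn pg.
have sg : sorted geq g by case/andP: pg.
have n0 : (0 < n)%N by lia.
pose NB c := Posz (nboxes n g (absz (c %% n)%Z)).
have NBp : forall c, NB (c %% n)%Z = NB c by move=> c; rewrite /NB modz_mod.
have NBc : forall x y, (x %% n)%Z = (y %% n)%Z -> NB x = NB y.
  by move=> x y H; rewrite -NBp H NBp.
have VK : forall k i : 'I_n, vk n g k i = Posz (i == k) -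
    (NB (i%:Z - k%:Z) *+ 2 - NB (i%:Z - k%:Z - 1) - NB (i%:Z - k%:Z + 1)).
  move=> k i.
  have hi' := ltn_ord i; have hk' := ltn_ord k.
  have hi : 0 <= i%:Z < n by lia.
  rewrite /vk nCC_Sh nCV_Sh W // addr0 modz_small; last by lia.
  rewrite NBE //.
  rewrite (@Sh_ext _ _ _ (fun c => Posz ((((k%:Z + 1) + c) %% n)%Z == i%:Z))); last first.
    by move=> c; rewrite (addrC c 1) addrA.
  rewrite (@Sh_ext _ _ (fun c => Posz (((k%:Z + (c - 1)) %% n)%Z == i%:Z)) (fun c => Posz ((((k%:Z - 1) + c) %% n)%Z == i%:Z))); last first.
    by move=> c; rewrite (addrC c (-1)) addrA.
  rewrite !NBE // eq_sym.
  have -> : i%:Z - (k%:Z + 1) = i%:Z - k%:Z - 1 by ring.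
  by have -> : i%:Z - (k%:Z - 1) = i%:Z - k%:Z + 1 by ring.
have Col : colorless n g <-> forall c, NB c = NB 0.
  split.
    move=> H c; rewrite /NB mod0z /=.
    have hge : 0 <= (c %% n)%Z by apply: modz_ge0; lia.
    have hlt : (c %% n)%Z < n by apply: ltz_pmod; lia.
    have hj : (absz (c %% n)%Z < n)%N by move: hlt; rewrite -{1}(gez0_abs hge); lia.
    by have := H (Ordinal hj) (Ordinal n0) => /= ->.
  move=> H i j.
  have Ei := H i; have Ej := H j.
  have hi' := ltn_ord i; have hj' := ltn_ord j.
  rewrite /NB mod0z (@modz_small i) /= in Ei; last by lia.
  rewrite /NB mod0z (@modz_small j) /= in Ej; last by lia.
  by move: Ei; rewrite -Ej => -[].
have Z0 : colorless n g -> forall k i : 'I_n, vk n g k i = Posz (i == k).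
  move=> /Col H k i; rewrite VK !H mulr2n addrK subrr subr0 //.
split => //.
split.
  move=> C; exists (Ordinal n0) => i; rewrite Z0 //.
move=> [k Hk]; apply/Col; apply: (@cyc n) => // c hc.
have := Hk (Ordinal (ltn_pmod (c + k) n0)); rewrite VK /=.
have Ei : Posz ((c + k) %% n)%N = (((c%:Z + k%:Z) %% n)%Z) by rewrite -modz_nat PoszD.
have Em : forall t, NB ((((c + k) %% n)%N)%:Z - k%:Z + t) = NB (c%:Z + t).
  move=> t; apply: NBc; rewrite Ei -addrA modzDml; congr (_ %% _)%Z; ring.
have -> : (Ordinal (ltn_pmod (c + k) n0) == k) = (((c + k) %% n)%N == k) by [].
have -> : (((c + k) %% n)%N == k) = (c == 0%N).
  apply/idP/idP => /eqP h.
    have : (((k%:Z + c%:Z) %% n)%Z == k%:Z).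
      by rewrite addrC -Ei h.
    rewrite M2 //; last by lia.
    by rewrite subrr mod0z modz_small; lia.
  by rewrite h add0n modn_small.
rewrite -[X in NB X]addr0 !Em addr0.
by move=> h; exact: h.
Qed.
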